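(* Assume $\mathcal G$ is connected and all agents are MEICMP. Fix a leading node $i_0\in\mathbb V$ and replace $\Sigma_{i_0}$ by the augmented system $\Sigma'_{i_0}$: $\dot x_{i_0}=f_{i_0}(x_{i_0},u_{i_0}+\mathrm z,\mathrm w_{i_0})$, $y_{i_0}=h_{i_0}(x_{i_0},u_{i_0}+\mathrm z,\mathrm w_{i_0})$ with a constant $\mathrm z\in\mathbb R^d$, all other agents being unchanged. Let $\mathrm y\in(\mathbb R^d)^{|\mathbb V|}$ be such that $k_i^{-1}(\mathrm y_i)\ne\emptyset$ for every $i\in\mathbb V$. Then there exists $\mathrm z\in\mathbb R^d$ such that $\mathrm y$ is forcible as a steady state for the augmented network, i.e. there exist output-strictly MEICMP controllers $\{\Pi_e\}_{e\in\mathbb E}$ such that the closed loop (with $\Sigma'_{i_0}$ in place of $\Sigma_{i_0}$) has a steady state with output $\mathrm y$.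
   Context: Graph and network: $\mathcal G=(\mathbb V,\mathbb E)$ finite graph with arbitrarily oriented edges, incidence matrix $E$ ($E_{ik}=-1$, $E_{jk}=1$ for edge $k=(i,j)$, other entries of column $k$ zero), $d\ge1$, $\mathcal E=E\otimes I_d$. Agents $\Sigma_i$: $\dot x_i=f_i(x_i,u_i,\mathrm w_i)$, $y_i=h_i(x_i,u_i,\mathrm w_i)$, $u_i,y_i\in\mathbb R^d$, $\mathrm w_i$ fixed constants; controllers $\Pi_e$: $\dot\eta_e=\phi_e(\eta_e,\zeta_e)$, $\mu_e=\psi_e(\eta_e,\zeta_e)$; closed loop: $\zeta=\mathcal E^Ty$, $u=-\mathcal E\mu$. Steady-state relation of (unaugmented) agent $i$: $k_i=\{(\mathrm u_i,\mathrm y_i):\exists\mathrm x_i,\ f_i(\mathrm x_i,\mathrm u_i,\mathrm w_i)=0,\ \mathrm y_i=h_i(\mathrm x_i,\mathrm u_i,\mathrm w_i)\}$, $k_i^{-1}(\mathrm y_i)=\{\mathrm u_i:(\mathrm u_i,\mathrm y_i)\in k_i\}$. A 4-tuple of constants $(\mathrm u,\mathrm y,\zeta,\mu)$ is a steady state of a closed loop if there are constant agent and controller states making every state derivative zero, producing outputs $\mathrm y_i$ from inputs $\mathrm u_i$ and $\mu_e$ from $\zeta_e$, with $\zeta=\mathcal E^T\mathrm y$, $\mathrm u=-\mathcal E\mu$. A relation $R\subseteq\mathbb R^d\times\mathbb R^d$ is cyclically monotone (CM) if $\sum_{i=1}^N y_i^T(u_i-u_{i-1})\ge0$ for all $N\ge1$,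 $(u_1,y_1),\dots,(u_N,y_N)\in R$, $u_0=u_N$; maximal CM if not strictly contained in a larger CM relation. A system with input $u$, output $y$, state $x$ is (output-strictly) passive w.r.t. a steady-state pair $(\mathrm u,\mathrm y)$ if there is a storage $S(x)\ge0$ and $\rho\ge0$ ($\rho>0$ for output-strict) with $S(x(t_1))-S(x(t_0))\le\int_{t_0}^{t_1}[-\rho\|y-\mathrm y\|^2+(y-\mathrm y)^T(u-\mathrm u)]dt$ along trajectories. A system is (output-strictly) MEICMP if it is (output-strictly) passive w.r.t. every steady-state pair and its steady-state relation is maximal CM. *)

(* Defs.v *)
From Stdlib Require Import Reals.
From mathcomp Require Import ssreflect ssrbool ssrfun eqtype ssrnat seq choice fintype bigop fingraph.

Set Implicit Arguments.
Unset Strict Implicit.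
Unset Printing Implicit Defensive.

Local Open Scope R_scope.

Definition vec (d : nat) := 'I_d -> R.

Definition vadd d (u v : vec d) : vec d := fun k => u k + v k.
Definition vsub d (u v : vec d) : vec d := fun k => u k - v k.
Definition dot d (u v : vec d) : R := \big[Rplus/R0]_(k < d) (u k * v k).
Definition sqnorm d (u : vec d) : R := dot u u.

(** A (time-invariant, finite-dimensional) input/output system with
    input in R^m, output in R^p and state in R^(sdim):
      xdot = sf x u,   y = sh x u.
    (Constant exogenous parameters such as w_i are absorbed into sf, sh.) *)
Record system (m p : nat) := System {
  sdim : nat;
  sf : vec sdim -> vec m -> vec sdim;
  sh : vec sdim -> vec m -> vec p
}.
Arguments sdim {m p} s.
Arguments sf {m p} s _ _.
Arguments sh {m p} s _ _.
Arguments System {m p} sdim sf sh.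

Definition ss_rel m p (S : system m p) (u : vec m) (y : vec p) : Prop :=
  exists x : vec (sdim S), (forall k, sf S x u k = 0) /\ (forall k, y k = sh S x u k).

Definition is_traj m p (S : system m p) (u : R -> vec m) (x : R -> vec (sdim S)) : Prop :=
  forall t (k : 'I_(sdim S)),
    derivable_pt_lim (fun s => x s k) t (sf S (x t) (u t) k).
Arguments is_traj {m p} S u x.

Definition dissipative_with m (S : system m m) (rho : R) (ub yb : vec m)
    (St : vec (sdim S) -> R) : Prop :=
  forall (u : R -> vec m) (x : R -> vec (sdim S)), is_traj S u x ->
  forall t0 t1, t0 <= t1 ->
  forall pr : Riemann_integrable
      (fun t => - rho * sqnorm (vsub (sh S (x t) (u t)) yb)
                + dot (vsub (sh S (x t) (u t)) yb) (vsub (u t) ub)) t0 t1,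
    St (x t1) - St (x t0) <= RiemannInt pr.
Arguments dissipative_with {m} S rho ub yb St.

Definition passive_wrt m (S : system m m) (ub yb : vec m) : Prop :=
  exists (St : vec (sdim S) -> R) (rho : R),
    (forall x, 0 <= St x) /\ 0 <= rho /\ dissipative_with S rho ub yb St.

Definition os_passive_wrt m (S : system m m) (ub yb : vec m) : Prop :=
  exists (St : vec (sdim S) -> R) (rho : R),
    (forall x, 0 <= St x) /\ 0 < rho /\ dissipative_with S rho ub yb St.

(** Predecessor index in a cycle of length N: i-1, and 0 |-> N-1
    (this is u_0 = u_N after shifting indices 1..N to 0..N-1). *)
Definition cprev (N i : nat) : nat := match i with 0 => N.-1 | S j => j end.

Definition cyc_monotone d (Rel : vec d -> vec d -> Prop) : Prop :=
  forall (N : nat) (us ys : nat -> vec d), (0 < N)%N ->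
    (forall i, (i < N)%N -> Rel (us i) (ys i)) ->
    0 <= \big[Rplus/R0]_(i < N) dot (ys i) (vsub (us i) (us (cprev N i))).

Definition max_cyc_monotone d (Rel : vec d -> vec d -> Prop) : Prop :=
  cyc_monotone Rel /\
  forall Rel' : vec d -> vec d -> Prop, cyc_monotone Rel' ->
    (forall u y, Rel u y -> Rel' u y) -> (forall u y, Rel' u y -> Rel u y).

Definition MEICMP d (S : system d d) : Prop :=
  (forall u y, ss_rel S u y -> passive_wrt S u y) /\ max_cyc_monotone (ss_rel S).

Definition OS_MEICMP d (S : system d d) : Prop :=
  (forall u y, ss_rel S u y -> os_passive_wrt S u y) /\ max_cyc_monotone (ss_rel S).

Definition incidence n m (src dst : 'I_m -> 'I_n) (v : 'I_n) (e : 'I_m) : R :=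
  (if v == dst e then 1 else 0) - (if v == src e then 1 else 0).

Definition undirected_adj n m (src dst : 'I_m -> 'I_n) : rel 'I_n :=
  fun a b => [exists e, ((src e == a) && (dst e == b)) || ((src e == b) && (dst e == a))].

Definition graph_connected n m (src dst : 'I_m -> 'I_n) : Prop :=
  forall a b : 'I_n, connect (undirected_adj src dst) a b.

Definition augment d (S : system d d) (z : vec d) : system d d :=
  @System d d (sdim S) (fun x u => sf S x (vadd u z)) (fun x u => sh S x (vadd u z)).

(** Closed-loop steady state (u, y, zeta, mu) of agents Sig and controllers Pi:
    zeta = (E (x) I_d)^T y,  u = -(E (x) I_d) mu. *)
Definition closed_loop_ss d n m (src dst : 'I_m -> 'I_n)
    (Sig : 'I_n -> system d d) (Pi : 'I_m -> system d d)
    (u y : 'I_n -> vec d) (zeta mu : 'I_m -> vec d) : Prop :=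
  (exists (xs : forall i, vec (sdim (Sig i))) (etas : forall e, vec (sdim (Pi e))),
     (forall i k, sf (Sig i) (xs i) (u i) k = 0) /\
     (forall i k, y i k = sh (Sig i) (xs i) (u i) k) /\
     (forall e k, sf (Pi e) (etas e) (zeta e) k = 0) /\
     (forall e k, mu e k = sh (Pi e) (etas e) (zeta e) k)) /\
  (forall e k, zeta e k = \big[Rplus/R0]_(v < n) (incidence src dst v e * y v k)) /\
  (forall i k, u i k = - \big[Rplus/R0]_(e < m) (incidence src dst i e * mu e k)).

(* Main.v *)
From HB Require Import structures.
Require Import Defs.
From Stdlib Require Import Reals Lra ClassicalEpsilon FunctionalExtensionality.
From mathcomp Require Import ssreflect ssrbool ssrfun eqtype ssrnat seq choice fintype bigop fingraph.

Local Open Scope R_scope.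

Lemma Rplus_assoc' : associative Rplus. Proof. move=> *; ring. Qed.
HB.instance Definition _ := Monoid.isComLaw.Build R R0 Rplus Rplus_assoc' Rplus_comm Rplus_0_l.

Lemma sumR_opp n (F : 'I_n -> R) :
  (- \big[Rplus/R0]_(i < n) F i) = \big[Rplus/R0]_(i < n) (- F i).
Proof. apply: (big_endo (fun x => - x)) => [x y|]; ring. Qed.

Lemma sumR_mull n c (F : 'I_n -> R) :
  c * \big[Rplus/R0]_(i < n) F i = \big[Rplus/R0]_(i < n) (c * F i).
Proof. apply: (big_endo (fun x => c * x)) => [x y|]; ring. Qed.

Lemma sumR_delta n (i : 'I_n) (F : 'I_n -> R) :
  \big[Rplus/R0]_(v < n) (if i == v then F v else 0) = F i.
Proof.
rewrite (bigD1 i) //= eqxx big1 ?Rplus_0_r // => v /negbTE.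
by rewrite eq_sym => ->.
Qed.

Lemma sumR_delta' n (i : 'I_n) (F : 'I_n -> R) :
  \big[Rplus/R0]_(v < n) (F v * (if v == i then 1 else 0)) = F i.
Proof.
rewrite (bigD1 i) //= eqxx big1 ?Rplus_0_r ?Rmult_1_r // => v /negbTE ->.
by rewrite Rmult_0_r.
Qed.

Lemma sumR0 n : \big[Rplus/R0]_(v < n) 0 = 0.
Proof. by rewrite big1. Qed.

Lemma dot0 d (u v : vec d) : (forall k, u k = 0) -> dot u v = 0.
Proof. move=> H; rewrite /dot big1 // => k _; rewrite H; ring. Qed.

Lemma sumR_ge0 n (F : 'I_n -> R) : (forall i, 0 <= F i) -> 0 <= \big[Rplus/R0]_(i < n) F i.
Proof. move=> H; apply: (big_ind (fun x => 0 <= x)) => //; [lra | move=> *; lra]. Qed.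

Lemma sumR_le n (F : 'I_n -> R) j : (forall i, 0 <= F i) -> F j <= \big[Rplus/R0]_(i < n) F i.
Proof.
move=> H; rewrite (bigD1 j) //=.
have : 0 <= \big[Rplus/R0]_(i < n | i != j) F i.
  by apply: (big_ind (fun x => 0 <= x)) => //; [lra | move=> *; lra].
move=> ?; rewrite -{1}(Rplus_0_r (F j)); exact: Rplus_le_compat_l.
Qed.

Lemma flow d n m (src dst : 'I_m -> 'I_n) (a b : 'I_n) :
  connect (undirected_adj src dst) a b -> forall w : vec d,
  exists mu : 'I_m -> vec d, forall i k,
    (- \big[Rplus/R0]_(e < m) (incidence src dst i e * mu e k)) =
    (if i == a then w k else 0) - (if i == b then w k else 0).
Proof.
move/connectP=> [p Hp ->] {b}.
elim: p a Hp => [|c p IH] a /=.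
  move=> _ w; exists (fun _ _ => 0) => i k.
  rewrite big1; last by move=> e _; ring.
  case: (i == a); ring.
move=> /andP [Hac Hp] w.
have [mu Hmu] := IH c Hp w.
move: Hac => /existsP [e He].
have [s Hs] : exists s : R, forall i,
    - (incidence src dst i e * s) = (if i == a then 1 else 0) - (if i == c then 1 else 0).
  case/orP: He => /andP [/eqP Hs /eqP Hd].
    exists 1 => i; rewrite /incidence Hs Hd; ring.
  exists (-1) => i; rewrite /incidence Hs Hd; ring.
exists (fun e' k => mu e' k + (if e' == e then s * w k else 0)) => i k.
rewrite (eq_bigr (fun e' => incidence src dst i e' * mu e' k +
    incidence src dst i e' * (s * w k) * (if e' == e then 1 else 0))); last first.
  by move=> e' _; case: (e' == e); ring.
rewrite big_split /= sumR_delta'. have Hm := Hmu i k.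
have H2 : - (incidence src dst i e * (s * w k)) = - (incidence src dst i e * s) * w k by ring.
rewrite Hs in H2.
move: Hm H2; case: (i == a); case: (i == c); case: (i == last c p) => H H2; set B := \big[Rplus/R0]_(e < m) _ in H *; lra.
Qed.

Definition const_sys {d} (c : vec d) : system d d :=
  @System d d 0%N (fun x _ => x) (fun _ _ => c).

Lemma ss_const d (c : vec d) u y : ss_rel (const_sys c) u y <-> (forall k, y k = c k).
Proof.
split; first by move=> [x [_ H]].
move=> H; exists (fun _ => 0); split => //; by case.
Qed.

Lemma const_OS d (c : vec d) : OS_MEICMP (const_sys c).
Proof.
split.
  move=> u y /ss_const Hy; exists (fun _ => 0), 1; split; first by move=> _; apply: Rle_refl.
  split; first lra.
  move=> uu x _ t0 t1 Ht pr.
  rewrite Rminus_0_r.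
  have -> : RiemannInt pr = RiemannInt (RiemannInt_P14 t0 t1 0).
    apply: Rle_antisym; apply: RiemannInt_P19 => // z _; rewrite /fct_cte /=;
    rewrite /sqnorm !dot0 /vsub /=; try lra; move=> k; rewrite Hy; ring.
  rewrite RiemannInt_P15; lra.
split.
  move=> N us ys HN Hrel.
  have E : forall i, (i < N)%N -> dot (ys i) (vsub (us i) (us (cprev N i))) =
     dot c (us i) - dot c (us (cprev N i)).
    move=> i Hi; rewrite /dot /vsub.
    rewrite (eq_bigr (fun k => c k * us i k + - (c k * us (cprev N i) k))).
      by rewrite big_split /= -sumR_opp.
    move=> k _; have := (Hrel i Hi); move/ss_const => ->; ring.
  rewrite (eq_bigr (fun i : 'I_N => dot c (us i) + - dot c (us (cprev N i)))); last first.
    move=> i _; rewrite E //; ring.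
  rewrite big_split /= -sumR_opp.
  case: N HN {Hrel E} => // N _.
  rewrite big_ord_recr big_ord_recl /=.
  have -> : \big[Rplus/R0]_(i < N) dot c (us (0 + i)%N) = \big[Rplus/R0]_(i < N) dot c (us i) by []. right; ring.
move=> Rel' HCM Hsub u y Hu; apply/ss_const.
pose a := vsub y c.
pose us := fun i : nat => if i == 0%N then u else vadd u a.
pose ys := fun i : nat => if i == 0%N then y else c.
have := HCM 2%N us ys isT.
have Hr : (forall i, (i < 2)%N -> Rel' (us i) (ys i)).
  move=> [|[|i]] // _; rewrite /us /ys /=; apply: Hsub; exact/ss_const.
move/(_ Hr).
rewrite !big_ord_recr big_ord0 /= /us /ys /= /dot /vsub /vadd /a.
rewrite Rplus_0_l -big_split /=.
rewrite (eq_bigr (fun k => - ((y k - c k) * (y k - c k)))); last by move=> k _; rewrite /vsub; ring.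
rewrite -sumR_opp => H.
have H2 : forall j, (y j - c j) * (y j - c j) <= 0.
  move=> j; have := @sumR_le d (fun k => (y k - c k) * (y k - c k)) j.
  move=> /(_ (fun k => Rle_0_sqr _)); lra.
move=> k; have := H2 k; have := Rle_0_sqr (y k - c k); rewrite /Rsqr => h1 h2.
have : (y k - c k) * (y k - c k) = 0 by lra.
move/Rmult_integral => [] ?; lra.
Qed.

Definition castx {d} (b : bool) (X : system d d) z (x : vec (sdim X)) :
  vec (sdim (if b then augment X z else X)) :=
  match b with true => x | false => x end.

Theorem mainTheorem10 (d n m : nat) (src dst : 'I_m -> 'I_n)
  (Sig : 'I_n -> system d d) (i0 : 'I_n) (y : 'I_n -> vec d) :
  (0 < d)%N ->
  (forall e, src e != dst e) ->
  graph_connected src dst ->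
  (forall i, MEICMP (Sig i)) ->
  (forall i, exists ui : vec d, ss_rel (Sig i) ui (y i)) ->
  exists z : vec d,
    exists Pi : 'I_m -> system d d,
      (forall e, OS_MEICMP (Pi e)) /\
      exists (u : 'I_n -> vec d) (zeta mu : 'I_m -> vec d),
        closed_loop_ss src dst
          (fun i => if i == i0 then augment (Sig i) z else Sig i) Pi u y zeta mu.
Proof.
move=> _ _ Hconn _ Hss.
pose ui := fun i => proj1_sig (constructive_indefinite_description _ (Hss i)).
have Hui : forall i, ss_rel (Sig i) (ui i) (y i).
  by move=> i; rewrite /ui; case: constructive_indefinite_description.
pose xs := fun i => proj1_sig (constructive_indefinite_description _ (Hui i)).
have Hxs : forall i, (forall k, sf (Sig i) (xs i) (ui i) k = 0) /\
                     (forall k, y i k = sh (Sig i) (xs i) (ui i) k).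
  by move=> i; rewrite /xs; case: constructive_indefinite_description.
pose muv := fun v => proj1_sig (constructive_indefinite_description _
   (@flow d n m src dst v i0 (Hconn v i0) (ui v))).
have Hmuv : forall v i k,
    (- \big[Rplus/R0]_(e < m) (incidence src dst i e * muv v e k)) =
    (if i == v then ui v k else 0) - (if i == i0 then ui v k else 0).
  by move=> v; rewrite /muv; case: constructive_indefinite_description.
pose S := fun k => \big[Rplus/R0]_(v < n) ui v k.
pose c := fun e k => \big[Rplus/R0]_(v < n) muv v e k.
pose u := fun i k => ui i k - (if i == i0 then S k else 0).
exists S, (fun e => const_sys (c e)); split; first by move=> e; apply: const_OS.
exists u, (fun e k => \big[Rplus/R0]_(v < n) (incidence src dst v e * y v k)), c.
have Hu0 : forall i, i == i0 -> vadd (u i) S = ui i.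
  move=> i Hi; apply: functional_extensionality => k; rewrite /vadd /u Hi; ring.
have Hu1 : forall i, i != i0 -> u i = ui i.
  move=> i Hi; apply: functional_extensionality => k; rewrite /u (negbTE Hi); ring.
split; last split => //.
- exists (fun i => castx (i == i0) (Sig i) S (xs i)), (fun _ => fun _ => 0).
  split; last split; last split.
  + move=> i; have [Hf _] := Hxs i.
    case: (boolP (i == i0)) => Hi /= k; first by rewrite Hu0.
    by rewrite Hu1.
  + move=> i k; have [_ Hh] := Hxs i.
    case: (boolP (i == i0)) => Hi /=; first by rewrite Hu0.
    by rewrite Hu1.
  + by [].
  + by [].
- move=> i k.
  rewrite (eq_bigr (fun e => \big[Rplus/R0]_(v < n) (incidence src dst i e * muv v e k)));
    last by move=> e _; rewrite sumR_mull.
  rewrite exchange_big /= sumR_opp.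
  rewrite (eq_bigr (fun v => (if i == v then ui v k else 0) + - (if i == i0 then ui v k else 0)));
    last by move=> v _; rewrite Hmuv; ring.
  rewrite big_split /= sumR_delta -sumR_opp /u /S.
  case: (i == i0) => //; rewrite sumR0; ring.
Qed.
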